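(* Let $D$ be a vertex-transitive digraph and let $u\in VD$. Then the subdigraph induced by $\mathrm{desc}(u)$ is a tree if and only if the subdigraph induced by $\mathrm{anc}(u)$ is a tree.
   Context: A digraph is a set with an irreflexive antisymmetric arc relation $\to$. $\mathrm{desc}(u)$ is the set of vertices $v$ for which there is a directed path from $u$ to $v$; $\mathrm{anc}(u)$ is the set of vertices $v$ such that $u\in\mathrm{desc}(v)$. A digraph is called a tree if its underlying undirected graph is a tree. Vertex-transitive: the automorphism group acts transitively on vertices. *)

(* Defs.v *)
From Stdlib Require Import List Relations.
Import ListNotations.
Set Implicit Arguments.

Section Digraphs.
Variable V : Type.

Record digraph := Digraph {
  arc : V -> V -> Prop;
  arc_irrefl : forall x, ~ arc x x;
  arc_antisym : forall x y, arc x y -> ~ arc y x }.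

Definition automorphism (D : digraph) (f : V -> V) : Prop :=
  (forall x y, f x = f y -> x = y) /\
  (forall y, exists x, f x = y) /\
  (forall x y, arc D x y <-> arc D (f x) (f y)).

Definition vertex_transitive (D : digraph) : Prop :=
  forall x y, exists f, automorphism D f /\ f x = y.

Definition desc (D : digraph) (u : V) : V -> Prop :=
  fun v => clos_refl_trans V (arc D) u v.

Definition anc (D : digraph) (u : V) : V -> Prop :=
  fun v => desc D v u.

Definition uedge (D : digraph) (x y : V) : Prop := arc D x y \/ arc D y x.

Definition induced_uedge (D : digraph) (S : V -> Prop) (x y : V) : Prop :=
  S x /\ S y /\ uedge D x y.

Fixpoint chain (R : V -> V -> Prop) (x : V) (l : list V) : Prop :=
  match l with
  | [] => True
  | y :: l' => R x y /\ chain R y l'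
  end.

Definition induced_connected (D : digraph) (S : V -> Prop) : Prop :=
  forall x y, S x -> S y -> clos_refl_trans V (induced_uedge D S) x y.

Definition induced_has_cycle (D : digraph) (S : V -> Prop) : Prop :=
  exists x l, 2 <= length l /\ NoDup (x :: l) /\
    chain (induced_uedge D S) x l /\ induced_uedge D S (last l x) x.

Definition induced_tree (D : digraph) (S : V -> Prop) : Prop :=
  (exists x, S x) /\ induced_connected D S /\ ~ induced_has_cycle D S.

End Digraphs.

(* Main.v *)
Require Import Defs.
From Stdlib Require Import List Relations Classical Lia.
Import ListNotations.
Set Implicit Arguments.

Section Gen.
Variable V : Type.

Lemma last_cons : forall (l : list V) y z, last (z :: l) y = last l z.
Proof.
  induction l as [|w l IH]; intros y z; [reflexivity|].
  change (last (w :: l) y = last (w :: l) z). rewrite !IH. reflexivity.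
Qed.

Lemma last_app : forall (A B : list V) x, last (A ++ B) x = last B (last A x).
Proof.
  induction A as [|a A IH]; intros B x; [reflexivity|].
  simpl app. rewrite !last_cons. apply IH.
Qed.

Lemma in_last : forall (l : list V) x, In (last l x) (x :: l).
Proof.
  induction l as [|a l IH]; intros x; [left; reflexivity|].
  rewrite last_cons. right. apply IH.
Qed.

Lemma chain_app (R : V -> V -> Prop) : forall A B x,
  chain R x (A ++ B) <-> chain R x A /\ chain R (last A x) B.
Proof.
  induction A as [|a A IH]; intros B x; cbn [app chain].
  - simpl. tauto.
  - rewrite IH, last_cons. tauto.
Qed.

Lemma chain_mono (R R' : V -> V -> Prop) : (forall a b, R a b -> R' a b) ->
  forall l x, chain R x l -> chain R' x l.
Proof.
  intros H; induction l as [|a l IH]; intros x Hc; simpl in *; auto.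
  destruct Hc; split; auto.
Qed.

Lemma rt_chain (R : V -> V -> Prop) x y : clos_refl_trans V R x y ->
  exists l, chain R x l /\ last l x = y.
Proof.
  induction 1 as [x y H|x|x y z _ [l1 [H1 E1]] _ [l2 [H2 E2]]].
  - exists [y]; simpl; auto.
  - exists []; simpl; auto.
  - exists (l1 ++ l2). rewrite chain_app, last_app, E1. auto.
Qed.

Lemma chain_reach (R : V -> V -> Prop) : forall l x, chain R x l ->
  forall z, In z (x :: l) -> clos_refl_trans V R x z.
Proof.
  induction l as [|a l IH]; intros x Hc z Hz.
  - destruct Hz as [<-|[]]. apply rt_refl.
  - destruct Hc as [Hxa Hc]. destruct Hz as [<-|Hz]. apply rt_refl.
    eapply rt_trans; [apply rt_step; eauto|]. apply IH; auto.
Qed.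

Lemma chain_flip_reach (R : V -> V -> Prop) : forall l x,
  chain (fun a b => R b a) x l ->
  forall z, In z (x :: l) -> clos_refl_trans V R (last l x) z.
Proof.
  induction l as [|a l IH]; intros x Hc z Hz.
  - destruct Hz as [<-|[]]. apply rt_refl.
  - destruct Hc as [Hxa Hc]. rewrite last_cons.
    destruct Hz as [<-|Hz].
    + eapply rt_trans; [apply IH; [eauto|left; reflexivity]|]. apply rt_step; auto.
    + apply IH; auto.
Qed.

Lemma simple_path (R : V -> V -> Prop) : forall l x, chain R x l ->
  exists l', chain R x l' /\ last l' x = last l x /\ NoDup (x :: l').
Proof.
  induction l as [|y l0 IH]; intros x Hc.
  - exists []. simpl. repeat split; auto. constructor; [intros []|constructor].
  - destruct Hc as [Hxy Hc]. destruct (IH y Hc) as [m [Hm [Em Nm]]].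
    destruct (classic (In x (y :: m))) as [Hin|Hin].
    + destruct (in_split _ _ Hin) as [A [B EAB]].
      exists B. assert (Hc2 : chain R x (y :: m)) by (split; auto).
      rewrite EAB in Hc2. apply chain_app in Hc2. destruct Hc2 as [_ [_ HB]].
      split; [exact HB|split].
      * rewrite last_cons. rewrite <- Em. rewrite <- (last_cons m x y).
        rewrite EAB, last_app, last_cons. reflexivity.
      * rewrite EAB in Nm. eapply NoDup_app_remove_l; eauto.
    + exists (y :: m). split; [split; auto|split].
      * rewrite !last_cons. auto.
      * constructor; auto.
Qed.

Lemma chain_rev (R : V -> V -> Prop) : forall L x y,
  chain R x (L ++ [y]) -> chain (fun a b => R b a) y (rev L ++ [x]).
Proof.
  induction L as [|z L IH]; intros x y Hc.
  - simpl in *. tauto.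
  - destruct Hc as [Hxz Hc]. simpl rev. rewrite <- app_assoc.
    simpl app. apply IH in Hc.
    replace (rev L ++ [z; x]) with ((rev L ++ [z]) ++ [x]) by (rewrite <- app_assoc; reflexivity).
    apply chain_app. split; auto. rewrite last_last. simpl; auto.
Qed.

Lemma first_split (P : V -> Prop) : forall L, (exists z, In z L /\ P z) ->
  exists A w B, L = A ++ w :: B /\ P w /\ forall t, In t A -> ~ P t.
Proof.
  induction L as [|a L IH]; intros [z [Hz Pz]]; [destruct Hz|].
  destruct (classic (P a)) as [Pa|Pa].
  - exists [], a, L. simpl. auto.
  - destruct Hz as [<-|Hz]; [contradiction|].
    destruct IH as [A [w [B [E [Pw HA]]]]]; [eauto|].
    exists (a :: A), w, B. rewrite E. split; auto. split; auto.
    intros t [<-|Ht]; auto.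
Qed.

Lemma rt_mono (R R' : V -> V -> Prop) : (forall a b, R a b -> R' a b) ->
  forall a b, clos_refl_trans V R a b -> clos_refl_trans V R' a b.
Proof.
  intros H a b; induction 1; [apply rt_step; auto|apply rt_refl|eapply rt_trans; eauto].
Qed.

Lemma rt_sym (R : V -> V -> Prop) : (forall a b, R a b -> R b a) ->
  forall a b, clos_refl_trans V R a b -> clos_refl_trans V R b a.
Proof.
  intros H a b; induction 1; [apply rt_step; auto|apply rt_refl|eapply rt_trans; eauto].
Qed.

Lemma rt_transp (R : V -> V -> Prop) : forall a b,
  clos_refl_trans V (fun x y => R y x) a b <-> clos_refl_trans V R b a.
Proof.
  intros a b; split; induction 1;
  solve [apply rt_step; auto | apply rt_refl | eapply rt_trans; eauto].
Qed.

End Gen.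

Section Dg.
Variable V : Type.

Fixpoint nb (p y : V) (l : list V) : Prop :=
  match l with
  | [] => True
  | z :: l' => p <> z /\ nb y z l'
  end.

Definition outdeg1 (D : digraph V) (S : V -> Prop) : Prop :=
  forall q a b, S q -> S a -> S b -> arc D q a -> arc D q b -> a = b.

Lemma back_prop (D : digraph V) S : outdeg1 D S -> forall l y p,
  chain (induced_uedge D S) y l -> arc D y p -> S p -> nb p y l ->
  chain (fun a b => arc D b a) y l.
Proof.
  intros Ho; induction l as [|z l IH]; intros y p Hc Hyp Sp Hnb; simpl in *; auto.
  destruct Hc as [[Sy [Sz Hyz]] Hc]. destruct Hnb as [Hpz Hnb].
  destruct Hyz as [Hyz|Hzy].
  - exfalso. apply Hpz. eapply Ho; [exact Sy| | |exact Hyp|]; eauto.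
  - split; auto. eapply IH; eauto.
Qed.

Lemma fwd (D : digraph V) S : outdeg1 D S -> forall L p y w,
  chain (induced_uedge D S) y (L ++ [w]) -> nb p y (L ++ [w]) ->
  arc D (last L y) w -> chain (arc D) y (L ++ [w]).
Proof.
  intros Ho; induction L as [|z L IH]; intros p y w Hc Hnb Ha.
  - simpl in *. auto.
  - rewrite last_cons in Ha. simpl app in *.
    destruct Hc as [[Sy [Sz Hyz]] Hc]. destruct Hnb as [_ Hnb]. destruct Hyz as [H|H].
    + split; auto. eapply IH; eauto.
    + exfalso. pose proof (@back_prop _ _ Ho _ _ _ Hc H Sy Hnb) as Hf.
      apply chain_app in Hf. destruct Hf as [_ [Hf _]].
      eapply arc_antisym; eauto.
Qed.

Lemma nb_close : forall (l : list V) p y x, NoDup (p :: y :: l) -> ~ In x (y :: l) ->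
  (l = [] -> p <> x) -> nb p y (l ++ [x]).
Proof.
  induction l as [|a l IH]; intros p y x Hn Hx Hl.
  - simpl. split; auto.
  - simpl. split.
    + inversion Hn; subst. intro E; subst. apply H1. right; left; auto.
    + inversion Hn; subst. apply IH; auto.
      * intro Hin. apply Hx. right; auto.
      * intros _ E; subst. apply Hx. left; auto.
Qed.

Lemma nb_of_nodup : forall (l : list V) p y, NoDup (p :: y :: l) -> nb p y l.
Proof.
  induction l as [|a l IH]; intros p y Hn; simpl; auto.
  inversion Hn; subst. split.
  - intro E; subst. apply H1. right; left; auto.
  - apply IH; auto.
Qed.

Lemma orient (D : digraph V) S x l : outdeg1 D S -> 2 <= length l -> NoDup (x :: l) ->
  chain (induced_uedge D S) x l -> induced_uedge D S (last l x) x ->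
  (chain (arc D) x l /\ arc D (last l x) x) \/
  (chain (fun a b => arc D b a) x l /\ arc D x (last l x)).
Proof.
  intros Ho Hlen Hnd Hc Hcl.
  destruct l as [|l1 [|l2 rest]]; simpl in Hlen; try lia.
  destruct Hcl as [Sk [Sx [Hkx|Hxk]]].
  - left. split; auto.
    assert (H : chain (arc D) x ((l1 :: l2 :: rest) ++ [x])).
    { eapply fwd with (p := x); [exact Ho| | |exact Hkx].
      - apply chain_app. split; auto. split; [|exact I]. split; [exact Sk|split; [exact Sx|left; exact Hkx]].
      - change (x <> l1 /\ nb x l1 ((l2 :: rest) ++ [x])). split.
        + intro E; subst. inversion Hnd; subst. apply H1; left; auto.
        + apply nb_close; auto.
          * intro Hin. inversion Hnd; subst. apply H1; auto.
          * discriminate. }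
    apply chain_app in H. tauto.
  - right. split; auto. eapply back_prop; eauto.
    change (last (l1 :: l2 :: rest) x <> l1 /\ nb x l1 (l2 :: rest)). split.
    + rewrite !last_cons. intro E. apply NoDup_cons_iff in Hnd as [_ Hnd].
      apply NoDup_cons_iff in Hnd as [Hn _]. apply Hn. rewrite <- E. apply in_last.
    + apply nb_of_nodup; auto.
Qed.

Lemma mk_cycle (D : digraph V) S x l : 2 <= length l -> NoDup (x :: l) ->
  chain (uedge D) x l -> uedge D (last l x) x -> (forall z, In z (x :: l) -> S z) ->
  induced_has_cycle D S.
Proof.
  intros Hlen Hnd Hc Hcl HS. exists x, l. split; [exact Hlen|split; [exact Hnd|split]].
  - clear Hcl Hnd Hlen. revert x Hc HS. induction l as [|a l IH]; intros x Hc HS; simpl in *; auto.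
    destruct Hc as [Ha Hc]. split.
    + repeat split; auto.
    + apply IH; [exact Hc|]. intros z [<-|Hz]; auto.
  - split; [apply HS, in_last|split; [apply HS; left; auto|exact Hcl]].
Qed.

Lemma closed_walk_cycle (D : digraph V) q a : arc D q a -> desc D a q ->
  induced_has_cycle D (desc D a).
Proof.
  intros Hqa Haq. destruct (rt_chain Haq) as [l [Hc El]].
  destruct (@simple_path _ _ _ _ Hc) as [m [Hm [Em Nm]]].
  destruct m as [|t1 [|t2 m']].
  - simpl in Em. rewrite El in Em. subst q. rewrite <- Em in Hqa. exfalso; exact (arc_irrefl _ _ Hqa).
  - simpl in Em. rewrite El in Em. subst q. destruct Hm as [H _]. rewrite <- Em in Hqa. exfalso; exact (arc_antisym _ _ _ H Hqa).
  - apply mk_cycle with (x := a) (l := t1 :: t2 :: m'); auto.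
    + simpl; lia.
    + eapply chain_mono; [|exact Hm]. intros; left; auto.
    + rewrite Em, El. left; auto.
    + apply chain_reach; auto.
Qed.

Lemma config_cycle (D : digraph V) q a b u : arc D q a -> arc D q b -> a <> b ->
  desc D a u -> desc D b u -> exists w, induced_has_cycle D (desc D w).
Proof.
  intros Hqa Hqb Hab Hau Hbu.
  destruct (rt_chain Hau) as [la0 [Hla0 Ela0]].
  destruct (@simple_path _ _ _ _ Hla0) as [la [Hla [Ela Nla]]]. rewrite Ela0 in Ela.
  destruct (rt_chain Hbu) as [lb0 [Hlb0 Elb0]].
  destruct (@simple_path _ _ _ _ Hlb0) as [lb [Hlb [Elb Nlb]]]. rewrite Elb0 in Elb.
  destruct (classic (In q (a :: la))) as [Hq1|Hq1].
  { exists a. eapply closed_walk_cycle; eauto. apply (@chain_reach _ _ _ _ Hla); auto. }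
  destruct (classic (In q (b :: lb))) as [Hq2|Hq2].
  { exists b. eapply closed_walk_cycle; eauto. apply (@chain_reach _ _ _ _ Hlb); auto. }
  assert (H1 : chain (arc D) q (a :: la)) by (split; auto).
  assert (H2 : chain (arc D) q (b :: lb)) by (split; auto).
  assert (N1 : NoDup (q :: a :: la)) by (constructor; auto).
  assert (N2 : NoDup (q :: b :: lb)) by (constructor; auto).
  assert (R1 := @chain_reach _ _ _ _ H1). assert (R2 := @chain_reach _ _ _ _ H2).
  assert (U2 : In u (b :: lb)) by (rewrite <- Elb; apply in_last).
  destruct (first_split (fun t => In t (b :: lb)) (a :: la)) as [A [w [B [E1 [Hw HA]]]]].
  { exists u. split; auto. rewrite <- Ela. apply in_last. }
  destruct (in_split _ _ Hw) as [C [D' E2]].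
  rewrite E1 in H1, N1, R1. rewrite E2 in H2, N2, R2.
  exists q.
  assert (H1' : chain (arc D) q (A ++ [w])).
  { replace (A ++ w :: B) with ((A ++ [w]) ++ B) in H1 by (rewrite <- app_assoc; reflexivity).
    apply chain_app in H1. tauto. }
  assert (H2' : chain (arc D) q (C ++ [w])).
  { replace (C ++ w :: D') with ((C ++ [w]) ++ D') in H2 by (rewrite <- app_assoc; reflexivity).
    apply chain_app in H2. tauto. }
  apply chain_rev in H2'. apply chain_app in H2'. destruct H2' as [Hr [Hcl _]].
  apply mk_cycle with (x := q) (l := A ++ w :: rev C).
  - rewrite length_app. simpl. rewrite length_rev.
    destruct A as [|a0 A]; destruct C as [|c0 C]; simpl; try lia.
    exfalso. simpl in E1, E2. injection E1; injection E2; intros; subst. auto.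
  - replace (q :: A ++ w :: rev C) with ((q :: A ++ [w]) ++ rev C)
      by (simpl; rewrite <- app_assoc; reflexivity).
    apply NoDup_app.
    + replace (A ++ w :: B) with ((A ++ [w]) ++ B) in N1 by (rewrite <- app_assoc; reflexivity).
      change (NoDup ((q :: A ++ [w]) ++ B)) in N1.
      apply NoDup_app_remove_r in N1. exact N1.
    + apply NoDup_rev. inversion N2; subst.
      apply NoDup_app_remove_r in H4. exact H4.
    + intros t Ht Hr2. apply in_rev in Hr2.
      destruct Ht as [<-|Ht].
      * inversion N2; subst. apply H3. apply in_or_app; auto.
      * apply in_app_or in Ht. destruct Ht as [Ht|[<-|[]]].
        -- apply (HA t Ht). rewrite E2. apply in_or_app; auto.
        -- inversion N2; subst. apply NoDup_remove_2 in H4. apply H4. apply in_or_app; auto.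
  - replace (A ++ w :: rev C) with ((A ++ [w]) ++ rev C) by (rewrite <- app_assoc; reflexivity).
    apply chain_app. split.
    + eapply chain_mono; [|exact H1']. intros; left; auto.
    + rewrite last_last. eapply chain_mono; [|exact Hr]. intros; right; auto.
  - replace (A ++ w :: rev C) with ((A ++ [w]) ++ rev C) by (rewrite <- app_assoc; reflexivity).
    rewrite last_app, last_last. right. simpl in Hcl. tauto.
  - intros z [<-|Hz]; [apply rt_refl|].
    apply in_app_or in Hz. destruct Hz as [Hz|[<-|Hz]].
    + apply R1. right. apply in_or_app; auto.
    + apply R1. right. apply in_or_app; right; left; auto.
    + apply in_rev in Hz. apply R2. right. apply in_or_app; auto.
Qed.

End Dg.

Section Main.
Variable V : Type.

Lemma rt_map (D : digraph V) f : (forall x y, arc D x y -> arc D (f x) (f y)) ->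
  forall a b, desc D a b -> desc D (f a) (f b).
Proof.
  intros H a b; unfold desc; induction 1; [apply rt_step; auto|apply rt_refl|eapply rt_trans; eauto].
Qed.

Lemma last_map (f : V -> V) : forall l x, last (map f l) (f x) = f (last l x).
Proof.
  induction l as [|a l IH]; intros x; [reflexivity|].
  simpl map. rewrite !last_cons. apply IH.
Qed.

Lemma auto_cycle (D : digraph V) f w : automorphism D f ->
  induced_has_cycle D (desc D w) -> induced_has_cycle D (desc D (f w)).
Proof.
  intros [Hi [_ Ha]] [x [l [Hlen [Hnd [Hc Hcl]]]]].
  assert (Hf : forall a b, induced_uedge D (desc D w) a b ->
     induced_uedge D (desc D (f w)) (f a) (f b)).
  { intros a b [Sa [Sb Hu]]. split; [|split].
    - apply (@rt_map _ f); [intros; apply (proj1 (Ha _ _)); auto|exact Sa].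
    - apply (@rt_map _ f); [intros; apply (proj1 (Ha _ _)); auto|exact Sb].
    - destruct Hu as [Hu|Hu]; [left|right]; apply (proj1 (Ha _ _)); auto. }
  exists (f x), (map f l). split; [rewrite length_map; auto|split; [|split]].
  - change (NoDup (map f (x :: l))). clear -Hi Hnd. induction Hnd; simpl; constructor; auto.
    intro Hin. apply in_map_iff in Hin. destruct Hin as [y [E Hy]]. apply Hi in E. subst; auto.
  - clear Hcl Hnd Hlen. revert x Hc. induction l as [|a l IH]; intros x Hc; simpl in *; auto.
    destruct Hc; split; auto.
  - rewrite last_map. apply Hf; auto.
Qed.

Lemma anc_connected (D : digraph V) u : induced_connected D (anc D u).
Proof.
  assert (P : forall x y, clos_refl_trans V (arc D) x y -> desc D y u ->
     clos_refl_trans V (induced_uedge D (anc D u)) x y).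
  { intros x y H. induction H as [x y H|x|x y z H1 IH1 H2 IH2]; intros Hu.
    - apply rt_step. split; [|split].
      + unfold anc, desc. eapply rt_trans; [apply rt_step; eauto|exact Hu].
      + exact Hu.
      + left; auto.
    - apply rt_refl.
    - eapply rt_trans; [apply IH1|apply IH2; auto].
      unfold desc. eapply rt_trans; eauto. }
  intros x y Hx Hy. eapply rt_trans.
  - apply P; [exact Hx|apply rt_refl].
  - apply rt_sym; [|apply P; [exact Hy|apply rt_refl]].
    intros a b [Sa [Sb Hu]]. split; [|split]; auto. destruct Hu; [right|left]; auto.
Qed.

Lemma dir (D : digraph V) u : vertex_transitive D ->
  induced_tree D (desc D u) -> induced_tree D (anc D u).
Proof.
  intros VT [_ [_ Hnc]]. split; [exists u; apply rt_refl|split; [apply anc_connected|]].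
  intros Hcyc. apply Hnc.
  assert (H : exists w, induced_has_cycle D (desc D w)).
  { destruct (classic (outdeg1 D (anc D u))) as [Ho|Ho].
    - destruct Hcyc as [x [l [Hlen [Hnd [Hc Hcl]]]]]. exists x.
      destruct (orient Ho Hlen Hnd Hc Hcl) as [[Ha Hk]|[Hf Hk]].
      + apply mk_cycle with (x := x) (l := l); auto.
        * eapply chain_mono; [|exact Ha]. intros; left; auto.
        * left; auto.
        * apply (@chain_reach _ _ _ _ Ha).
      + apply mk_cycle with (x := x) (l := l); auto.
        * eapply chain_mono; [|exact Hf]. intros; right; auto.
        * right; auto.
        * intros z Hz. unfold desc. eapply rt_trans; [apply rt_step; exact Hk|].
          apply (@chain_flip_reach _ _ _ _ Hf); auto.
    - apply NNPP; intro Hn; apply Ho; intros q a b Sq Sa Sb Hqa Hqb.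
      apply NNPP; intro Hab. apply Hn. exact (@config_cycle _ D q a b u Hqa Hqb Hab Sa Sb). }
  destruct H as [w Hw]. destruct (VT w u) as [f [Hf Hfw]]. rewrite <- Hfw.
  apply auto_cycle; auto.
Qed.

Definition rev_dg (D : digraph V) : digraph V :=
  @Digraph V (fun x y => arc D y x) (fun x => arc_irrefl D x)
    (fun x y H => arc_antisym D y x H).

Lemma tree_ext (D D' : digraph V) S S' : (forall v, S v <-> S' v) ->
  (forall x y, uedge D x y <-> uedge D' x y) ->
  induced_tree D S -> induced_tree D' S'.
Proof.
  intros HS HU [[x Hx] [Hc Hnc]].
  assert (I1 : forall a b, induced_uedge D S a b -> induced_uedge D' S' a b).
  { intros a b [Sa [Sb Hu]]. split; [|split]; [apply HS|apply HS|apply HU]; auto. }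
  assert (I2 : forall a b, induced_uedge D' S' a b -> induced_uedge D S a b).
  { intros a b [Sa [Sb Hu]]. split; [|split]; [apply HS|apply HS|apply HU]; auto. }
  split; [exists x; apply HS; auto|split].
  - intros a b Ha Hb. eapply rt_mono; [exact I1|]. apply Hc; apply HS; auto.
  - intros [y [l [Hlen [Hnd [Hch Hcl]]]]]. apply Hnc. exists y, l.
    split; [auto|split; [auto|split]].
    + eapply chain_mono; [exact I2|exact Hch].
    + apply I2; auto.
Qed.

End Main.

Theorem lemma3p3 (V : Type) (D : digraph V) (u : V) :
  vertex_transitive D ->
  (induced_tree D (desc D u) <-> induced_tree D (anc D u)).
Proof.
  intros VT. split; [apply dir; auto|].
  intros H.
  assert (VTr : vertex_transitive (rev_dg D)).
  { intros x y. destruct (VT x y) as [f [[Hi [Hs Ha]] Hfx]].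
    exists f. split; [split; [auto|split; [auto|]]|auto].
    intros a b. simpl. apply Ha. }
  assert (HU : forall x y, uedge D x y <-> uedge (rev_dg D) x y).
  { intros x y. unfold uedge. simpl. tauto. }
  assert (Hd : induced_tree (rev_dg D) (desc (rev_dg D) u)).
  { eapply tree_ext; [|exact HU|exact H].
    intros v. unfold anc, desc. simpl. symmetry. apply rt_transp. }
  apply (dir VTr) in Hd.
  eapply tree_ext; [|intros x y; symmetry; apply HU|exact Hd].
  intros v. unfold anc, desc. simpl. apply rt_transp.
Qed.
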